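(* Let $n\ge 3$ and let $G_n$ be the directed graph whose vertex set is $S_n$ (permutations in one-line notation $[u(1),\dots,u(n)]$), with a directed edge $\mathbf{u}\to\mathbf{v}$ if and only if $\max_{i\in\{1,\dots,n\}}\bigl(v^{-1}(i)-u^{-1}(i)\bigr)=1$. If $D\subseteq S_n$ is a dominating set of $G_n$, i.e., every vertex $\mathbf{u}\notin D$ has an edge $\mathbf{u}\to\mathbf{v}$ to some $\mathbf{v}\in D$, then $$|D|\ \ge\ \frac{n!}{\frac{3}{4}\cdot 2^{n-1}}.$$
   Context: For a permutation $\mathbf{u}=[u(1),\dots,u(n)]$ in one-line notation, $u^{-1}(i)$ denotes the position of $i$ in the sequence. The quantity $\max_i(v^{-1}(i)-u^{-1}(i))$ is the rewriting cost of changing state $\mathbf{u}$ to state $\mathbf{v}$ via minimal-push-up operations. *)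

(* Defs.v *)
From mathcomp Require Import all_boot all_order all_algebra all_fingroup.
Set Implicit Arguments. Unset Strict Implicit. Unset Printing Implicit Defensive.
Import GRing.Theory Num.Theory.

(* A permutation u : 'S_n is read in one-line notation: position j holds u j
   (positions and values are 0-indexed; differences of positions are
   unaffected by the shift). *)
Definition pos n (u : 'S_n) (i : 'I_n) : int := (nat_of_ord ((u^-1)%g i))%:Z.

(* rewriting cost max_i (v^-1(i) - u^-1(i)); for n = 0 the max over the empty
   set is taken to be 0 (irrelevant since n >= 3). *)
Definition cost n (u v : 'S_n) : int :=
  \big[Order.max/0%R]_(i : 'I_n) (pos v i - pos u i)%R.

Definition edge n (u v : 'S_n) : bool := cost u v == 1%R.

Definition dominating n (D : {set 'S_n}) : Prop :=
  forall u : 'S_n, u \notin D -> exists2 v, v \in D & edge u v.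

(* Main.v *)
Require Import Defs.
From mathcomp Require Import all_boot all_order all_algebra all_fingroup.
From mathcomp Require Import zify.
Import GRing.Theory Num.Theory Order.TTheory.
Set Implicit Arguments. Unset Strict Implicit. Unset Printing Implicit Defensive.

Definition P n (u : 'S_n) (x : 'I_n) : nat := (u^-1)%g x.

Lemma PK n (u : 'S_n) i : P u (u i) = i.
Proof. by rewrite /P permK. Qed.

Definition ball n (v : 'S_n) := [set u : 'S_n | (u == v) || edge u v].

Lemma ball_pos n (v u : 'S_n) : u \in ball v -> forall x, (P v x <= (P u x).+1)%N.
Proof.
rewrite inE => /orP [/eqP -> x | He x]; first exact: leqnSn.
have := le_bigmax 0%R (fun i => (pos v i - pos u i)%R) x.
move: He; rewrite /edge /cost => /eqP ->; rewrite /pos /P.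
move=> h; lia.
Qed.
Definition A n k (u : 'S_n) := [set x | (P u x < k)%N].

Lemma P_inj n (u : 'S_n) x y : P u x = P u y -> x = y.
Proof. by move/val_inj/perm_inj. Qed.

Lemma A_img n k (u : 'S_n) : A k u = u @: [set i : 'I_n | (i < k)%N].
Proof.
apply/setP => x; rewrite inE; apply/idP/imsetP.
  by move=> h; exists ((u^-1)%g x); rewrite ?inE // permKV.
by case=> i; rewrite inE => hi ->; rewrite PK.
Qed.

Lemma cardA n k (u v : 'S_n) : #|A k u| = #|A k v|.
Proof. by rewrite !A_img !card_imset //; apply: perm_inj. Qed.

Lemma caseT n k (d : 'I_n) (v u : 'S_n) (hu : forall x, (P v x <= (P u x).+1)%N) (hk : (k.+1 < n)%N) :
  (k < P u (v (insubd d k.+1)))%N -> A k.+1 u = A k.+1 v.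
Proof.
move=> hb; apply/eqP; rewrite eqEcard (cardA _ u v) leqnn andbT.
apply/subsetP => x; rewrite !inE => hx.
have := hu x; rewrite leq_eqVlt => /orP [/eqP e|]; last by move=> h; lia.
have Py : P v (v (insubd d k.+1)) = k.+1 by rewrite PK val_insubd hk.
case: (ltnP (P u x) k) => hl; first by lia.
have : x = v (insubd d k.+1) by apply: (@P_inj _ v); rewrite Py e; lia.
move=> ex; subst x; lia.
Qed.

Lemma caseF n k (d : 'I_n) (v u : 'S_n) (hu : forall x, (P v x <= (P u x).+1)%N) (hk : (k.+1 < n)%N) :
  ~~ (k < P u (v (insubd d k.+1)))%N -> A k.+1 u = A k u :|: [set v (insubd d k.+1)].
Proof.
move=> hb.
have Py : P v (v (insubd d k.+1)) = k.+1 by rewrite PK val_insubd hk.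
have hy : P u (v (insubd d k.+1)) = k by have := hu (v (insubd d k.+1)); rewrite Py; lia.
apply/setP => x; rewrite !inE; apply/idP/orP.
  rewrite ltnS leq_eqVlt => /orP [/eqP e|h]; last by left.
  by right; apply/eqP/(@P_inj _ u); rewrite e hy.
by case=> [h|/eqP ->]; lia.
Qed.

Definition Bits n (v u : 'S_n) : {set 'I_(n-3)} :=
  [set j : 'I_(n-3) | (j < P u (v (insubd (widen_ord (leq_subr 3 n) j) j.+1)))%N].

Lemma A_eq n (v u u' : 'S_n) (hu : forall x, (P v x <= (P u x).+1)%N)
  (hu' : forall x, (P v x <= (P u' x).+1)%N) : Bits v u = Bits v u' ->
  forall k, (k <= n - 3)%N -> A k u = A k u'.
Proof.
move=> hB; elim=> [_|k IH hk].
  by apply/setP => x; rewrite !inE.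
have hk' : (k.+1 < n)%N by lia.
have hj : (k < n - 3)%N by lia.
have eb : (Ordinal hj \in Bits v u) = (Ordinal hj \in Bits v u') by rewrite hB.
move: eb; rewrite !inE /= => eb.
set d := widen_ord (leq_subr 3 n) (Ordinal hj).
case hb: (k < P u (v (insubd d k.+1)))%N.
  by rewrite (caseT hu hk' hb) (@caseT _ _ d _ _ hu' hk') // -eb.
rewrite (@caseF _ _ d _ _ hu hk') ?hb // (@caseF _ _ d _ _ hu' hk') ?IH // ?(ltnW hk) //.
by rewrite -eb hb.
Qed.

Lemma pref_eq n (v u u' : 'S_n) (hu : forall x, (P v x <= (P u x).+1)%N)
  (hu' : forall x, (P v x <= (P u' x).+1)%N) : Bits v u = Bits v u' ->
  forall i : 'I_n, (i < n - 3)%N -> u i = u' i.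
Proof.
move=> hB i hi.
have e1 := A_eq hu hu' hB (ltnW hi).
have e2 := A_eq hu hu' hB hi.
have h1 : u i \in A i.+1 u' by rewrite -e2 inE PK.
have h2 : u i \notin A i u' by rewrite -e1 inE PK ltnn.
move: h1 h2; rewrite !inE => h1 h2.
have : P u' (u i) = P u' (u' i) by rewrite PK; lia.
by move/P_inj.
Qed.
Definition key n (u : 'S_n) : {ffun 'I_n -> option 'I_n} :=
  [ffun i : 'I_n => if (i < n - 3)%N then Some (u i) else None].

Lemma imset_fact n (B : {set 'S_n}) (T1 T2 : finType) (f : 'S_n -> T1) (g : 'S_n -> T2) :
  {in B &, forall x y, g x = g y -> f x = f y} -> (#|f @: B| <= #|g @: B|)%N.
Proof.
move=> H.
pose h z := f (odflt 1%g [pick x in B | g x == z]).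
suff -> : f @: B = h @: (g @: B) by apply: leq_imset_card.
rewrite -imset_comp; apply: eq_in_imset => x xB /=; rewrite /h.
case: pickP => [y /andP [yB /eqP e]|/(_ x)]; last by rewrite xB eqxx.
by rewrite /= (H y x).
Qed.

Lemma card_touch n (v : 'S_n) : (#|@key n @: ball v| <= 2 ^ (n - 3))%N.
Proof.
apply: (leq_trans (imset_fact (g := Bits v) _)).
  move=> u u' hu hu' e; apply/ffunP => i; rewrite !ffunE.
  case: ifP => // hi; congr Some.
  exact: (pref_eq (ball_pos hu) (ball_pos hu') e).
apply: (leq_trans (max_card _)).
have -> : #|{set 'I_(n-3)}| = #|powerset [set: 'I_(n-3)]|.
  by apply: eq_card => B; rewrite powersetE subsetT inE.
by rewrite card_powerset cardsT card_ord.
Qed.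

Lemma card_class n (w : 'S_n) : (3 <= n)%N -> (#|[set u | key u == key w]| <= 6)%N.
Proof.
move=> hn.
pose E := [set i : 'I_n | n - 3 <= i]%N.
have hE : (#|E| <= 3)%N.
  have o : 'I_n by exists 0%N; lia.
  apply: (leq_trans _ (card_size [:: insubd o (n-3); insubd o (n-2); insubd o (n-1)])).
  apply: subset_leq_card; apply/subsetP => i; rewrite !inE => hi.
  rewrite -!(inj_eq val_inj) !val_insubd.
  case: i hi => k hk /= hi.
  have -> : (n - 3 < n)%N by lia.
  have -> : (n - 2 < n)%N by lia.
  have -> : (n - 1 < n)%N by lia.
  apply/orP; case: (ltnP k (n-2)) => h1; first by left; apply/eqP; lia.
  right; apply/orP; case: (ltnP k (n-1)) => h2; first by left; apply/eqP; lia.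
  by right; apply/eqP; lia.
apply: (@leq_trans #|[set s * w | s in perm_on E]|%g).
  apply: subset_leq_card; apply/subsetP => u; rewrite inE => /eqP e.
  apply/imsetP; exists (u * w^-1)%g; last by rewrite mulgKV.
  apply/subsetP => i; rewrite !inE; apply: contraR; rewrite -ltnNge => hi.
  have : key u i = key w i by rewrite e.
  rewrite !ffunE hi => -[ei].
  by rewrite permM ei permK.
apply: (leq_trans (leq_imset_card _ _)).
by rewrite card_perm; apply: (leq_trans (leq_fact hE)).
Qed.

Lemma escape n (v w : 'S_n) : (3 <= n)%N -> exists2 u, key u = key w & u \notin ball v.
Proof.
move=> hn.
have o : 'I_n by exists 0%N; lia.
pose z := v (insubd o (n - 1)).
pose p := (w^-1)%g z.
pose q : 'I_n := if (p < n - 3)%N then p else insubd o (n - 3).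
have hq : (q <= n - 3)%N.
  rewrite /q; case: ifP => h; first lia.
  by rewrite val_insubd; have -> : (n - 3 < n)%N by lia.
exists (tperm q p * w)%g.
  apply/ffunP => i; rewrite !ffunE; case: ifP => // hi; congr Some.
  rewrite permM; congr (w _); rewrite /q; case: ifP => h; first by rewrite tperm1 perm1.
  apply: tpermD; rewrite -(inj_eq val_inj) /=.
    rewrite val_insubd; have -> : (n - 3 < n)%N by lia. by apply/eqP; lia.
  by apply/eqP; lia.
apply/negP => /ball_pos /(_ z).
have -> : P v z = (n - 1)%N by rewrite /z PK val_insubd; have -> : (n - 1 < n)%N by lia.
have -> : z = (tperm q p * w)%g q by rewrite permM tpermL /p permKV.
rewrite PK; lia.
Qed.
Lemma count_main n (hn : (3 <= n)%N) (D : {set 'S_n}) :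
  dominating D -> (n`! <= 3 * (#|D| * 2 ^ (n - 3)))%N.
Proof.
move=> hdom.
have cov : forall u, exists2 v, v \in D & u \in ball v.
  move=> u; case: (boolP (u \in D)) => hu.
    by exists u => //; rewrite inE eqxx.
  by case: (hdom u hu) => v vD e; exists v => //; rewrite inE e orbT.
pose K := [set @key n u | u : 'S_n].
pose T v := @key n @: ball v.
pose Dk k := [set v in D | k \in T v].
have h1 : forall k, k \in K -> (1 < #|Dk k|)%N.
  move=> k /imsetP [w _ ->].
  case: (cov w) => v0 v0D w0.
  case: (escape v0 w hn) => u eu nu.
  case: (cov u) => v1 v1D u1.
  apply/card_gt1P; exists v0, v1; split.
  - by rewrite inE v0D; apply/imsetP; exists w.
  - by rewrite inE v1D; apply/imsetP; exists u.
  - by apply: contraNneq nu => ->.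
have h2 : (n`! <= 6 * #|K|)%N.
  rewrite -card_Sn -[X in (X <= _)%N]sum1_card.
  apply: (@leq_trans (\sum_(u : 'S_n) \sum_(k in K) (if key u == k then 1 else 0))%N).
    apply: leq_sum => u _.
    have uK : key u \in K by apply/imsetP; exists u.
    by rewrite (bigD1 (key u)) //= eqxx; apply: leq_addr.
  rewrite exchange_big /= mulnC -sum_nat_const.
  apply: leq_sum => k /imsetP [w _ ->].
  rewrite -big_mkcond /= sum1_card.
  apply: (leq_trans _ (card_class w hn)).
  by apply: subset_leq_card; apply/subsetP => u; rewrite !inE.
have h3 : (\sum_(k in K) #|Dk k| <= #|D| * 2 ^ (n - 3))%N.
  apply: (@leq_trans (\sum_(k in K) \sum_(v in D) (if k \in T v then 1 else 0))%N).
    apply: leq_sum => k _; rewrite -big_mkcondr /= sum1_card.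
    by apply: subset_leq_card; apply/subsetP => v; rewrite !inE.
  rewrite exchange_big /= -sum_nat_const.
  apply: leq_sum => v _.
  rewrite -big_mkcondr /= sum1_card.
  apply: (leq_trans _ (card_touch v)).
  by apply: subset_leq_card; apply/subsetP => k; rewrite unfold_in => /andP [].
have h4 : (2 * #|K| <= \sum_(k in K) #|Dk k|)%N.
  rewrite mulnC -sum_nat_const; apply: leq_sum => k; exact: h1.
lia.
Qed.

From mathcomp Require Import ring.
Local Open Scope ring_scope.

Theorem theorem4 (n : nat) (hn : (3 <= n)%N) (D : {set 'S_n}) :
  dominating D ->
  (n`!)%:R / ((3%:R / 4%:R) * 2%:R ^+ n.-1) <= (#|D|)%:R :> rat.
Proof.
move=> hdom.
have e : (3%:R / 4%:R * 2%:R ^+ n.-1 : rat) = (3 * 2 ^ (n - 3))%:R.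
  have -> : n.-1 = (n - 3).+2 by lia.
  by rewrite natrM natrX !exprS; field.
rewrite e ler_pdivrMr ?ltr0n ?muln_gt0 ?expn_gt0 //.
rewrite -natrM ler_nat.
have := count_main hn hdom; lia.
Qed.
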